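(* Let $\varphi:[0,1]\to\mathbb{R}$ be a strictly increasing function of class $C^2[0,1]$ (so $\varphi'$ and $\varphi''$ are bounded on $[0,1]$), and set $s^-=\varphi(0)$, $s^+=\varphi(1)$. For a positive integer $N$ let $h=1/N$, $x_n=nh$, and let $\mathcal{M}^N_\varphi=\{s_n=\varphi(x_n): n=0,1,\dots,N\}$ be the induced non-uniform mesh on $[s^-,s^+]$, with steps $h_n=s_{n+1}-s_n>0$. For $1\le n\le N-1$ put $D_n=h_{n-1}^2+3h_{n-1}h_n+h_n^2$ and $$a_n=\frac{12h_n}{(h_{n-1}+h_n)D_n},\quad b_n=-\frac{12}{D_n},\quad c_n=\frac{12h_{n-1}}{(h_{n-1}+h_n)D_n},$$ $$d_n=\frac{h_n\,(h_{n-1}^2+h_nh_{n-1}-h_n^2)}{(h_{n-1}+h_n)D_n},\quad e_n=\frac{h_{n-1}\,(h_n^2+h_nh_{n-1}-h_{n-1}^2)}{(h_{n-1}+h_n)D_n}.$$ For a function $f\in C^6[s^-,s^+]$, writing $f_k=f(s_k)$ and $f''_k=f''(s_k)$, define the truncation error $E_n$ of the three-point compact approximation of the second derivative by $$d_nf''_{n-1}+f''_n+e_nf''_{n+1}=a_nf_{n-1}+b_nf_n+c_nf_{n+1}+E_n .$$ Then the approximation is fourth-order accurate on $\mathcal{M}^N_\varphi$: there is a constant $C$, depending only on $\varphi$ and $f$ (and not on $N$ or $n$), such that $|E_n|\le C h^4$ for all $N\ge 2$ and all $1\le n\le N-1$.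
   Context: The coefficients $a_n,b_n,c_n,d_n,e_n$ are those obtained by requiring that, after Taylor expansion about $s_n$, the coefficients of $f_n,f'_n,f''_n,f'''_n,f^{(4)}_n$ in $a_nf_{n-1}+b_nf_n+c_nf_{n+1}-(d_nf''_{n-1}+f''_n+e_nf''_{n+1})$ all vanish. Examples of admissible $\varphi$ on $[0,S]$ include the quadratic mesh $\varphi(x)=Sx^2$ and the Tavella–Randall mesh $\varphi(x)=K+\lambda\sinh(cx+c_1)$ with $0<K<S$, $\lambda>0$, $c=\sinh^{-1}((S-K)/\lambda)+\sinh^{-1}(K/\lambda)$, $c_1=-\sinh^{-1}(K/\lambda)$. *)

(* Defs.v *)
From Stdlib Require Import Reals.
Open Scope R_scope.

Definition deriv_on (a b : R) (g g' : R -> R) : Prop :=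
  forall x, a <= x <= b ->
  forall eps, 0 < eps -> exists delta, 0 < delta /\
    forall y, a <= y <= b -> y <> x -> Rabs (y - x) < delta ->
      Rabs ((g y - g x) / (y - x) - g' x) < eps.

Definition cont_on (a b : R) (g : R -> R) : Prop :=
  forall x, a <= x <= b ->
  forall eps, 0 < eps -> exists delta, 0 < delta /\
    forall y, a <= y <= b -> Rabs (y - x) < delta -> Rabs (g y - g x) < eps.

Definition Ck_derivs (a b : R) (k : nat) (D : nat -> R -> R) : Prop :=
  (forall i, (i < k)%nat -> deriv_on a b (D i) (D (S i))) /\ cont_on a b (D k).

Definition Ck_on (a b : R) (k : nat) (g : R -> R) : Prop :=
  exists D : nat -> R -> R, D 0%nat = g /\ Ck_derivs a b k D.

Definition strictly_incr_on (a b : R) (g : R -> R) : Prop :=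
  forall x y, a <= x <= b -> a <= y <= b -> x < y -> g x < g y.

Definition node (phi : R -> R) (N n : nat) : R := phi (INR n / INR N).
Definition step (phi : R -> R) (N n : nat) : R :=
  node phi N (S n) - node phi N n.

Section Coefs.
Variables (phi : R -> R) (N n : nat).
Let hm := step phi N (n - 1).
Let hp := step phi N n.
Definition Dn : R := hm ^ 2 + 3 * hm * hp + hp ^ 2.
Definition coef_a : R := 12 * hp / ((hm + hp) * Dn).
Definition coef_b : R := - (12 / Dn).
Definition coef_c : R := 12 * hm / ((hm + hp) * Dn).
Definition coef_d : R := hp * (hm ^ 2 + hp * hm - hp ^ 2) / ((hm + hp) * Dn).
Definition coef_e : R := hm * (hp ^ 2 + hp * hm - hm ^ 2) / ((hm + hp) * Dn).
End Coefs.

Definition trunc_err (phi : R -> R) (D : nat -> R -> R) (N n : nat) : R :=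
  let s := node phi N in
  let f := D 0%nat in
  let f2 := D 2%nat in
  coef_d phi N n * f2 (s (n - 1)%nat) + f2 (s n) + coef_e phi N n * f2 (s (S n))
  - (coef_a phi N n * f (s (n - 1)%nat) + coef_b phi N n * f (s n)
     + coef_c phi N n * f (s (S n))).

(* Main.v *)
Require Import Defs.
From Stdlib Require Import Reals Lra Lia Psatz FunctionalExtensionality Factorial.
From Coquelicot Require Import Coquelicot.
Open Scope R_scope.

Definition clamp (a b t : R) := Rmax a (Rmin b t).

Lemma clamp_in a b t : a <= b -> a <= clamp a b t <= b.
Proof. intros; unfold clamp, Rmax, Rmin; repeat destruct Rle_dec; lra. Qed.

Lemma clamp_id a b t : a <= t <= b -> clamp a b t = t.
Proof. intros; unfold clamp, Rmax, Rmin; repeat destruct Rle_dec; lra. Qed.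

Lemma clamp_lip a b t x : a <= b -> a <= x <= b -> Rabs (clamp a b t - x) <= Rabs (t - x).
Proof. intros; unfold clamp, Rmax, Rmin; repeat destruct Rle_dec;
  unfold Rabs; repeat destruct Rcase_abs; lra. Qed.

Lemma cont_clamp a b g x : a <= b -> cont_on a b g -> a <= x <= b ->
  continuity_pt (fun t => g (clamp a b t)) x.
Proof.
  intros Hab Hg Hx.
  unfold continuity_pt, continue_in, limit1_in, limit_in; simpl; unfold R_dist.
  intros eps Heps. destruct (Hg x Hx eps Heps) as [d [Hd H]].
  exists d; split; [lra|]. intros y [_ Hy].
  rewrite (clamp_id a b x Hx). apply H. apply clamp_in; lra.
  eapply Rle_lt_trans; [apply clamp_lip; lra | exact Hy].
Qed.

Lemma deriv_cont a b g g' : deriv_on a b g g' -> cont_on a b g.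
Proof.
  intros H x Hx eps Heps.
  destruct (H x Hx 1 Rlt_0_1) as [d [Hd Hd']].
  set (K := Rabs (g' x) + 1).
  assert (HK : 0 < K) by (unfold K; pose proof (Rabs_pos (g' x)); lra).
  exists (Rmin d (eps / K)); split.
  { apply Rmin_pos; [lra| apply Rdiv_lt_0_compat; lra]. }
  intros y Hy Hyx.
  destruct (Req_dec y x) as [->|Hne]. { rewrite Rminus_eq_0, Rabs_R0; lra. }
  assert (Hyx1 : Rabs (y - x) < d) by (eapply Rlt_le_trans; [exact Hyx| apply Rmin_l]).
  assert (Hyx2 : Rabs (y - x) < eps / K) by (eapply Rlt_le_trans; [exact Hyx| apply Rmin_r]).
  specialize (Hd' y Hy Hne Hyx1).
  assert (Hq : Rabs ((g y - g x) / (y - x)) <= K).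
  { unfold K. pose proof (Rabs_triang_inv ((g y - g x) / (y - x)) (g' x)). lra. }
  assert (Hnz : y - x <> 0) by lra.
  replace (g y - g x) with ((g y - g x) / (y - x) * (y - x)) by (field; auto).
  rewrite Rabs_mult.
  apply Rle_lt_trans with (K * Rabs (y - x)).
  { apply Rmult_le_compat_r; [apply Rabs_pos| exact Hq]. }
  apply Rmult_lt_reg_l with (/ K). { apply Rinv_0_lt_compat; lra. }
  replace (/ K * (K * Rabs (y - x))) with (Rabs (y - x)) by (field; lra).
  replace (/ K * eps) with (eps / K) by (unfold Rdiv; ring). exact Hyx2.
Qed.

Lemma bounded_on a b g : a <= b -> cont_on a b g -> exists M, forall u, a <= u <= b -> Rabs (g u) <= M.
Proof.
  intros Hab Hg.
  destruct (continuity_ab_maj (fun t => Rabs (g (clamp a b t))) a b Hab) as [Mx [H1 H2]].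
  { intros c Hc. apply continuity_pt_comp with (f2 := Rabs).
    - apply cont_clamp; auto.
    - apply Rcontinuity_abs. }
  exists (Rabs (g (clamp a b Mx))). intros u Hu. specialize (H1 u Hu). simpl in H1.
  rewrite clamp_id in H1 by lra. exact H1.
Qed.
Lemma mvt_on (a b : R) (g g' p p' : R -> R) (x y : R) : deriv_on a b g g' ->
  (forall t, derivable_pt_lim p t (p' t)) -> a <= x <= b -> a <= y <= b ->
  exists c, Rmin x y <= c <= Rmax x y /\
    (g y - p y) - (g x - p x) = (g' c - p' c) * (y - x).
Proof.
  intros Hg Hp Hx Hy.
  assert (Hab : a <= b) by lra.
  destruct (MVT_gen (fun t => g (clamp a b t) - p t) x y (fun t => g' t - p' t)) as [c [Hc Heq]].
  - intros t Ht.
    assert (Hta : a < t < b).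
    { unfold Rmin, Rmax in Ht; destruct Rle_dec; lra. }
    apply is_derive_Reals. apply derivable_pt_lim_minus; [| apply Hp].
    intros eps Heps.
    destruct (Hg t (conj (Rlt_le _ _ (proj1 Hta)) (Rlt_le _ _ (proj2 Hta))) eps Heps) as [d [Hd H]].
    assert (Hpos : 0 < Rmin d (Rmin (t - a) (b - t))).
    { repeat apply Rmin_pos; lra. }
    exists (mkposreal _ Hpos). intros h Hh0 Hh. simpl in Hh.
    pose proof (Rmin_l d (Rmin (t - a) (b - t))).
    pose proof (Rmin_r d (Rmin (t - a) (b - t))).
    pose proof (Rmin_l (t - a) (b - t)). pose proof (Rmin_r (t - a) (b - t)).
    assert (Hh' : - h <= Rabs h /\ h <= Rabs h) by (unfold Rabs; destruct Rcase_abs; lra).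
    assert (Hin : a <= t + h <= b) by lra.
    rewrite (clamp_id a b (t+h)) by lra. rewrite (clamp_id a b t) by lra.
    replace h with ((t + h) - t) at 2 by ring.
    apply H; [lra| lra |]. replace (t + h - t) with h by ring. lra.
  - intros t Ht.
    assert (Hta : a <= t <= b).
    { unfold Rmin, Rmax in Ht; destruct Rle_dec; lra. }
    apply continuity_pt_minus.
    + apply cont_clamp; auto. eapply deriv_cont; eauto.
    + apply derivable_continuous_pt. exists (p' t). apply Hp.
  - exists c; split; [exact Hc|].
    rewrite (clamp_id a b x Hx), (clamp_id a b y Hy) in Heq. lra.
Qed.

Fixpoint TP (G : nat -> R -> R) (k : nat) (x t : R) : R :=
  match k with O => 0 | S k => TP G k x t + G k x * (t - x) ^ k / INR (fact k) end.

Lemma TP_at G k x : TP G (S k) x x = G O x.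
Proof.
  induction k. simpl. field.
  change (TP G (S (S k)) x x) with (TP G (S k) x x + G (S k) x * (x - x) ^ (S k) / INR (fact (S k))).
  rewrite IHk. rewrite Rminus_eq_0, pow_i by lia. field. apply INR_fact_neq_0.
Qed.

Lemma TP_deriv G k x t : derivable_pt_lim (TP G (S k) x) t (TP (fun j => G (S j)) k x t).
Proof.
  revert t; induction k; intro t.
  - simpl.
    replace (fun t => 0 + G 0%nat x * 1 / 1) with (fun _ : R => G 0%nat x * 1 / 1) by (apply functional_extensionality; intros; ring).
    apply derivable_pt_lim_const.
  - change (TP G (S (S k)) x) with (fun t => TP G (S k) x t + G (S k) x * (t - x) ^ (S k) / INR (fact (S k))).
    change (TP (fun j => G (S j)) (S k) x t) with (TP (fun j => G (S j)) k x t + G (S k) x * (t - x) ^ k / INR (fact k)).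
    apply derivable_pt_lim_plus; [apply IHk|].
    replace (G (S k) x * (t - x) ^ k / INR (fact k)) with
      ((G (S k) x / INR (fact (S k))) * (INR (S k) * (t - x) ^ (pred (S k)) * 1)).
    2:{ simpl pred. rewrite fact_simpl, mult_INR. field. split; [apply INR_fact_neq_0| apply not_0_INR; lia]. }
    replace (fun t => G (S k) x * (t - x) ^ S k / INR (fact (S k))) with
      (mult_real_fct (G (S k) x / INR (fact (S k))) (comp (fun u => u ^ S k) (fun u => u - x))).
    2:{ apply functional_extensionality; intro u. unfold mult_real_fct, comp. field. apply INR_fact_neq_0. }
    apply derivable_pt_lim_scal. apply derivable_pt_lim_comp.
    + replace 1 with (1 - 0) by ring. apply derivable_pt_lim_minus. apply derivable_pt_lim_id. apply derivable_pt_lim_const.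
    + apply derivable_pt_lim_pow.
Qed.

Lemma taylor a b : forall k G M x t, (forall i, (i < k)%nat -> deriv_on a b (G i) (G (S i))) ->
  (forall u, a <= u <= b -> Rabs (G k u) <= M) -> a <= x <= b -> a <= t <= b ->
  Rabs (G O t - TP G k x t) <= M * Rabs (t - x) ^ k.
Proof.
  induction k; intros G M x t HG HM Hx Ht.
  - simpl. rewrite Rminus_0_r, Rmult_1_r. apply HM; auto.
  - assert (HM0 : 0 <= M) by (eapply Rle_trans; [apply Rabs_pos| apply (HM x Hx)]).
    destruct (mvt_on a b (G O) (G 1%nat) (TP G (S k) x) (TP (fun j => G (S j)) k x) x t)
      as [c [Hc Heq]]; auto.
    { apply HG; lia. }
    { intro; apply TP_deriv. }
    rewrite TP_at, Rminus_eq_0, Rminus_0_r in Heq. rewrite Heq, Rabs_mult.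
    assert (Hca : a <= c <= b) by (unfold Rmin, Rmax in Hc; destruct Rle_dec; lra).
    assert (IH := IHk (fun j => G (S j)) M x c).
    simpl in IH. assert (IH' : Rabs (G 1%nat c - TP (fun j => G (S j)) k x c) <= M * Rabs (c - x) ^ k).
    { apply IH; auto. intros i Hi. apply HG. lia. }
    assert (Hcx : Rabs (c - x) <= Rabs (t - x)).
    { unfold Rmin, Rmax in Hc; destruct Rle_dec; unfold Rabs; repeat destruct Rcase_abs; lra. }
    apply Rle_trans with (M * Rabs (c - x) ^ k * Rabs (t - x)).
    { apply Rmult_le_compat_r; [apply Rabs_pos| exact IH']. }
    simpl. rewrite (Rmult_comm (Rabs (t - x))), <- Rmult_assoc.
    apply Rmult_le_compat_r; [apply Rabs_pos|].
    apply Rmult_le_compat_l; auto.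
    apply pow_incr. split; [apply Rabs_pos| exact Hcx].
Qed.
Lemma frac_le1 u q : 0 < q -> - q <= u <= q -> Rabs (u / q) <= 1.
Proof. intros Hq Hu. assert (Rabs u <= q) by (apply Rabs_le; lra).
  unfold Rdiv; rewrite Rabs_mult, Rabs_inv, (Rabs_right q) by lra.
  apply (Rmult_le_reg_r q); [lra|]. rewrite Rmult_assoc, Rinv_l, Rmult_1_r; lra. Qed.

Lemma coef_bounds m p : 0 < m -> 0 < p ->
  Rabs (p * (m ^ 2 + p * m - p ^ 2) / ((m + p) * (m ^ 2 + 3 * m * p + p ^ 2))) <= 1 /\
  Rabs (m * (p ^ 2 + p * m - m ^ 2) / ((m + p) * (m ^ 2 + 3 * m * p + p ^ 2))) <= 1 /\
  Rabs (12 * p / ((m + p) * (m ^ 2 + 3 * m * p + p ^ 2))) * m ^ 2 <= 12 /\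
  Rabs (12 * m / ((m + p) * (m ^ 2 + 3 * m * p + p ^ 2))) * p ^ 2 <= 12 /\
  Rabs (m * p / 15 * (p - m) * ((2 * m ^ 2 + 5 * m * p + 2 * p ^ 2) / (2 * (m ^ 2 + 3 * m * p + p ^ 2))))
    <= m * p / 15 * Rabs (p - m).
Proof.
  intros Hm Hp.
  assert (h1 : 0 < m * m * m) by (repeat apply Rmult_lt_0_compat; lra).
  assert (h2 : 0 < m * m * p) by (repeat apply Rmult_lt_0_compat; lra).
  assert (h3 : 0 < m * p * p) by (repeat apply Rmult_lt_0_compat; lra).
  assert (h4 : 0 < p * p * p) by (repeat apply Rmult_lt_0_compat; lra).
  assert (hD : 0 < m ^ 2 + 3 * m * p + p ^ 2) by nra.
  assert (hQ : 0 < (m + p) * (m ^ 2 + 3 * m * p + p ^ 2)) by (apply Rmult_lt_0_compat; lra).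
  split; [apply frac_le1; [exact hQ| split; nra]|].
  split; [apply frac_le1; [exact hQ| split; nra]|].
  split.
  { rewrite Rabs_right by (apply Rle_ge, Rlt_le, Rdiv_lt_0_compat; lra).
    replace (12 * p / ((m + p) * (m ^ 2 + 3 * m * p + p ^ 2)) * m ^ 2) with
      (12 * ((p * m ^ 2) / ((m + p) * (m ^ 2 + 3 * m * p + p ^ 2)))) by (field; lra).
    assert (Rabs (p * m ^ 2 / ((m + p) * (m ^ 2 + 3 * m * p + p ^ 2))) <= 1) by (apply frac_le1; [exact hQ| split; nra]).
    pose proof (RRle_abs (p * m ^ 2 / ((m + p) * (m ^ 2 + 3 * m * p + p ^ 2)))). lra. }
  split.
  { rewrite Rabs_right by (apply Rle_ge, Rlt_le, Rdiv_lt_0_compat; lra).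
    replace (12 * m / ((m + p) * (m ^ 2 + 3 * m * p + p ^ 2)) * p ^ 2) with
      (12 * ((m * p ^ 2) / ((m + p) * (m ^ 2 + 3 * m * p + p ^ 2)))) by (field; lra).
    assert (Rabs (m * p ^ 2 / ((m + p) * (m ^ 2 + 3 * m * p + p ^ 2))) <= 1) by (apply frac_le1; [exact hQ| split; nra]).
    pose proof (RRle_abs (m * p ^ 2 / ((m + p) * (m ^ 2 + 3 * m * p + p ^ 2)))). lra. }
  rewrite !Rabs_mult. rewrite (Rabs_right (m * p / 15)) by (apply Rle_ge; unfold Rdiv; nra).
  assert (Rabs ((2 * m ^ 2 + 5 * m * p + 2 * p ^ 2) / (2 * (m ^ 2 + 3 * m * p + p ^ 2))) <= 1)
    by (apply frac_le1; [lra| split; nra]).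
  assert (0 <= m * p / 15 * Rabs (p - m)) by (apply Rmult_le_pos; [unfold Rdiv; nra| apply Rabs_pos]).
  rewrite <- (Rmult_1_r (m * p / 15 * Rabs (p - m))) at 2.
  apply Rmult_le_compat_l; auto.
Qed.

Lemma alg m p F0 F1 F2 F3 F4 F5 f0m f0p f2m f2p : 0 < m -> 0 < p ->
  p * (m ^ 2 + p * m - p ^ 2) / ((m + p) * (m ^ 2 + 3 * m * p + p ^ 2)) * f2m + F2 +
  m * (p ^ 2 + p * m - m ^ 2) / ((m + p) * (m ^ 2 + 3 * m * p + p ^ 2)) * f2p -
  (12 * p / ((m + p) * (m ^ 2 + 3 * m * p + p ^ 2)) * f0m +
   - (12 / (m ^ 2 + 3 * m * p + p ^ 2)) * F0 +
   12 * m / ((m + p) * (m ^ 2 + 3 * m * p + p ^ 2)) * f0p)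
  = F5 * (m * p / 15 * (p - m) * ((2 * m ^ 2 + 5 * m * p + 2 * p ^ 2) / (2 * (m ^ 2 + 3 * m * p + p ^ 2))))
  + p * (m ^ 2 + p * m - p ^ 2) / ((m + p) * (m ^ 2 + 3 * m * p + p ^ 2)) *
      (f2m - (F2 + F3 * (- m) + F4 * (- m) ^ 2 / 2 + F5 * (- m) ^ 3 / 6))
  + m * (p ^ 2 + p * m - m ^ 2) / ((m + p) * (m ^ 2 + 3 * m * p + p ^ 2)) *
      (f2p - (F2 + F3 * p + F4 * p ^ 2 / 2 + F5 * p ^ 3 / 6))
  - 12 * p / ((m + p) * (m ^ 2 + 3 * m * p + p ^ 2)) *
      (f0m - (F0 + F1 * (- m) + F2 * (- m) ^ 2 / 2 + F3 * (- m) ^ 3 / 6 + F4 * (- m) ^ 4 / 24 + F5 * (- m) ^ 5 / 120))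
  - 12 * m / ((m + p) * (m ^ 2 + 3 * m * p + p ^ 2)) *
      (f0p - (F0 + F1 * p + F2 * p ^ 2 / 2 + F3 * p ^ 3 / 6 + F4 * p ^ 4 / 24 + F5 * p ^ 5 / 120)).
Proof.
  intros Hm Hp. assert (0 < m ^ 2 + 3 * m * p + p ^ 2) by nra.
  field. lra.
Qed.

Lemma abs5 u1 u2 u3 u4 u5 : Rabs (u1 + u2 + u3 - u4 - u5) <= Rabs u1 + Rabs u2 + Rabs u3 + Rabs u4 + Rabs u5.
Proof. unfold Rabs; repeat destruct Rcase_abs; lra. Qed.
Lemma TP6 G x t : TP G 6 x t = G 0%nat x + G 1%nat x * (t - x) + G 2%nat x * (t - x) ^ 2 / 2
  + G 3%nat x * (t - x) ^ 3 / 6 + G 4%nat x * (t - x) ^ 4 / 24 + G 5%nat x * (t - x) ^ 5 / 120.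
Proof. simpl. field. Qed.
Lemma TP4 G x t : TP G 4 x t = G 0%nat x + G 1%nat x * (t - x) + G 2%nat x * (t - x) ^ 2 / 2
  + G 3%nat x * (t - x) ^ 3 / 6.
Proof. simpl. field. Qed.
Lemma TP2 G x t : TP G 2 x t = G 0%nat x + G 1%nat x * (t - x).
Proof. simpl. field. Qed.
Lemma TP1 G x t : TP G 1 x t = G 0%nat x.
Proof. simpl. field. Qed.

Lemma mono_le (a b : R) g x y : strictly_incr_on a b g -> a <= x -> x <= y -> y <= b -> g x <= g y.
Proof. intros H Hx Hxy Hy. destruct (Req_dec x y) as [->|Hne]; [lra|].
  apply Rlt_le, H; lra. Qed.

Theorem lemma1 (phi : R -> R) (D : nat -> R -> R) :
  strictly_incr_on 0 1 phi ->
  Ck_on 0 1 2 phi ->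
  Ck_derivs (phi 0) (phi 1) 6 D ->
  exists C : R, forall N n : nat, (2 <= N)%nat -> (1 <= n <= N - 1)%nat ->
    Rabs (trunc_err phi D N n) <= C * (1 / INR N) ^ 4.
Proof.
  intros Hinc [P [HP0 [HPd HPc]]] [HDd HDc]. subst phi.
  assert (HAB : P 0%nat 0 < P 0%nat 1) by (apply Hinc; lra).
  destruct (bounded_on 0 1 (P 2%nat)) as [M2 HM2]; [lra|auto|].
  destruct (bounded_on (P 0%nat 0) (P 0%nat 1) (D 6%nat)) as [M6 HM6]; [lra|auto|].
  assert (M2p : 0 <= M2) by (eapply Rle_trans; [apply Rabs_pos| apply (HM2 0); lra]).
  assert (M6p : 0 <= M6) by (eapply Rle_trans; [apply Rabs_pos| apply (HM6 (P 0%nat 0)); lra]).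
  set (A := P 0%nat 0) in *. set (B := P 0%nat 1) in *.
  set (M1 := Rabs (P 1%nat 0) + M2).
  assert (HM1 : forall u, 0 <= u <= 1 -> Rabs (P 1%nat u) <= M1).
  { intros u Hu. pose proof (taylor 0 1 1 (fun j => P (S j)) M2 0 u) as T.
    rewrite TP1 in T. simpl in T.
    assert (T' : Rabs (P 1%nat u - P 1%nat 0) <= M2 * (Rabs (u - 0) * 1)).
    { apply T; try lra; try (intros i Hi; apply HPd; lia); try exact HM2. }
    rewrite Rminus_0_r, Rmult_1_r, (Rabs_right u) in T' by lra.
    pose proof (Rabs_triang_inv (P 1%nat u) (P 1%nat 0)). unfold M1. nra. }
  assert (M1p : 0 <= M1) by (eapply Rle_trans; [apply Rabs_pos| apply (HM1 0); lra]).
  assert (HL : forall x t, 0 <= x <= 1 -> 0 <= t <= 1 -> Rabs (P 0%nat t - P 0%nat x) <= M1 * Rabs (t - x)).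
  { intros x t Hx Ht. pose proof (taylor 0 1 1 P M1 x t) as T. rewrite TP1 in T. simpl in T.
    rewrite Rmult_1_r in T. apply T; auto; intros i Hi; apply HPd; lia. }
  assert (HS : forall x t, 0 <= x <= 1 -> 0 <= t <= 1 ->
     Rabs (P 0%nat t - (P 0%nat x + P 1%nat x * (t - x))) <= M2 * Rabs (t - x) ^ 2).
  { intros x t Hx Ht. pose proof (taylor 0 1 2 P M2 x t) as T. rewrite TP2 in T.
    apply T; auto; intros i Hi; apply HPd; lia. }
  set (M5 := Rabs (D 5%nat A) + M6 * (B - A)).
  assert (HM5 : forall u, A <= u <= B -> Rabs (D 5%nat u) <= M5).
  { intros u Hu. pose proof (taylor A B 1 (fun j => D (5 + j)%nat) M6 A u) as T.
    rewrite TP1 in T. simpl in T.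
    assert (T' : Rabs (D 5%nat u - D 5%nat A) <= M6 * (Rabs (u - A) * 1)).
    { apply T; try lra; try (intros i Hi; apply HDd; lia); try exact HM6. }
    rewrite Rmult_1_r, (Rabs_right (u - A)) in T' by lra.
    pose proof (Rabs_triang_inv (D 5%nat u) (D 5%nat A)). unfold M5. nra. }
  assert (T6 : forall x t, A <= x <= B -> A <= t <= B -> Rabs (D 0%nat t - TP D 6 x t) <= M6 * Rabs (t - x) ^ 6).
  { intros. apply (taylor A B 6 D); auto. }
  assert (T4 : forall x t, A <= x <= B -> A <= t <= B ->
     Rabs (D 2%nat t - TP (fun j => D (2 + j)%nat) 4 x t) <= M6 * Rabs (t - x) ^ 4).
  { intros. apply (taylor A B 4 (fun j => D (2 + j)%nat)); auto. intros i Hi; apply HDd; lia. }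
  exists (M5 * M1 ^ 2 * (2 * M2) / 15 + 26 * M6 * M1 ^ 4).
  intros N n HN Hn.
  unfold trunc_err, coef_a, coef_b, coef_c, coef_d, coef_e, Dn, step, node.
  replace (S (n - 1)) with n by lia.
  rewrite minus_INR by lia. rewrite S_INR. change (INR 1) with 1.
  assert (HN2 : 2 <= INR N) by (replace 2 with (INR 2) by (simpl; ring); apply le_INR; lia).
  assert (Hn1 : 1 <= INR n) by (replace 1 with (INR 1) by reflexivity; apply le_INR; lia).
  assert (HnN : INR n + 1 <= INR N) by (rewrite <- S_INR; apply le_INR; lia).
  set (h := 1 / INR N).
  assert (Hh : 0 < h) by (unfold h; apply Rdiv_lt_0_compat; lra).
  set (x := INR n / INR N).
  replace ((INR n - 1) / INR N) with (x - h) by (unfold x, h; field; lra).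
  replace ((INR n + 1) / INR N) with (x + h) by (unfold x, h; field; lra).
  assert (Hx1 : h <= x) by (unfold x, h; unfold Rdiv; apply Rmult_le_compat_r; [left; apply Rinv_0_lt_compat; lra| lra]).
  assert (Hx2 : x + h <= 1).
  { unfold x, h. replace (INR n / INR N + 1 / INR N) with ((INR n + 1) / INR N) by (field; lra).
    apply (Rmult_le_reg_r (INR N)); [lra|]. unfold Rdiv. rewrite Rmult_assoc, Rinv_l by lra. lra. }
  set (s := P 0%nat x). set (sm := P 0%nat (x - h)). set (sp := P 0%nat (x + h)).
  assert (Hsm : sm < s) by (apply Hinc; lra).
  assert (Hsp : s < sp) by (apply Hinc; lra).
  assert (HsA : A <= sm) by (apply (mono_le 0 1); auto; lra).
  assert (HsB : sp <= B) by (apply (mono_le 0 1); auto; lra).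
  assert (Hmb : s - sm <= M1 * h).
  { pose proof (HL (x - h) x ltac:(lra) ltac:(lra)) as T.
    replace (x - (x - h)) with h in T by ring. rewrite (Rabs_right h) in T by lra.
    pose proof (RRle_abs (P 0%nat x - P 0%nat (x - h))). unfold s, sm. lra. }
  assert (Hpb : sp - s <= M1 * h).
  { pose proof (HL x (x + h) ltac:(lra) ltac:(lra)) as T.
    replace (x + h - x) with h in T by ring. rewrite (Rabs_right h) in T by lra.
    pose proof (RRle_abs (P 0%nat (x + h) - P 0%nat x)). unfold s, sp. lra. }
  assert (Hpm : Rabs ((sp - s) - (s - sm)) <= 2 * M2 * h ^ 2).
  { pose proof (HS x (x + h) ltac:(lra) ltac:(lra)) as T1.
    pose proof (HS x (x - h) ltac:(lra) ltac:(lra)) as T2.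
    replace (x + h - x) with h in T1 by ring. replace (x - h - x) with (- h) in T2 by ring.
    rewrite Rabs_Ropp in T2. rewrite (Rabs_right h) in T1, T2 by lra.
    replace ((sp - s) - (s - sm)) with ((P 0%nat (x + h) - (P 0%nat x + P 1%nat x * h)) + (P 0%nat (x - h) - (P 0%nat x + P 1%nat x * - h))) by (unfold s, sp, sm; ring).
    eapply Rle_trans; [apply Rabs_triang|]. lra. }
  clearbody s sm sp.
  set (m := s - sm) in *. set (p := sp - s) in *.
  assert (Hm : 0 < m) by (unfold m; lra). assert (Hp : 0 < p) by (unfold p; lra).
  assert (Es : sm = s - m) by (unfold m; ring). assert (Ep : sp = s + p) by (unfold p; ring).
  rewrite (alg m p (D 0%nat s) (D 1%nat s) (D 2%nat s) (D 3%nat s) (D 4%nat s) (D 5%nat s)) by auto.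
  assert (Hs : A <= s <= B) by lra.
  assert (R2m : Rabs (D 2%nat sm - (D 2%nat s + D 3%nat s * - m + D 4%nat s * (- m) ^ 2 / 2 +
       D 5%nat s * (- m) ^ 3 / 6)) <= M6 * m ^ 4).
  { pose proof (T4 s sm Hs ltac:(lra)) as T. rewrite TP4 in T. replace (sm - s) with (-m) in T by (unfold m; ring).
    rewrite Rabs_Ropp, (Rabs_right m) in T by lra. exact T. }
  assert (R2p : Rabs (D 2%nat sp - (D 2%nat s + D 3%nat s * p + D 4%nat s * p ^ 2 / 2 +
       D 5%nat s * p ^ 3 / 6)) <= M6 * p ^ 4).
  { pose proof (T4 s sp Hs ltac:(lra)) as T. rewrite TP4 in T. fold p in T.
    rewrite (Rabs_right p) in T by lra. exact T. }
  assert (R0m : Rabs (D 0%nat sm -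
      (D 0%nat s + D 1%nat s * - m + D 2%nat s * (- m) ^ 2 / 2 +
       D 3%nat s * (- m) ^ 3 / 6 + D 4%nat s * (- m) ^ 4 / 24 +
       D 5%nat s * (- m) ^ 5 / 120)) <= M6 * m ^ 6).
  { pose proof (T6 s sm Hs ltac:(lra)) as T. rewrite TP6 in T. replace (sm - s) with (-m) in T by (unfold m; ring).
    rewrite Rabs_Ropp, (Rabs_right m) in T by lra. exact T. }
  assert (R0p : Rabs (D 0%nat sp -
      (D 0%nat s + D 1%nat s * p + D 2%nat s * p ^ 2 / 2 +
       D 3%nat s * p ^ 3 / 6 + D 4%nat s * p ^ 4 / 24 +
       D 5%nat s * p ^ 5 / 120)) <= M6 * p ^ 6).
  { pose proof (T6 s sp Hs ltac:(lra)) as T. rewrite TP6 in T. fold p in T.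
    rewrite (Rabs_right p) in T by lra. exact T. }
  destruct (coef_bounds m p Hm Hp) as [Bd [Be [Ba [Bc BK]]]].
  assert (Hm4 : m ^ 4 <= (M1 * h) ^ 4) by (apply pow_incr; lra).
  assert (Hp4 : p ^ 4 <= (M1 * h) ^ 4) by (apply pow_incr; lra).
  eapply Rle_trans; [apply abs5|].
  assert (X1 : Rabs (D 5%nat s * (m * p / 15 * (p - m) * ((2 * m ^ 2 + 5 * m * p + 2 * p ^ 2) /
       (2 * (m ^ 2 + 3 * m * p + p ^ 2))))) <= M5 * ((M1 * h) * (M1 * h) / 15 * (2 * M2 * h ^ 2))).
  { rewrite (Rabs_mult (D 5%nat s)). apply Rmult_le_compat; [apply Rabs_pos| apply Rabs_pos| apply HM5; lra|].
    eapply Rle_trans; [exact BK|].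
    assert (m * p <= (M1 * h) * (M1 * h)) by (apply Rmult_le_compat; lra).
    apply Rmult_le_compat; [unfold Rdiv; apply Rmult_le_pos; [apply Rmult_le_pos; lra| lra]| apply Rabs_pos| |exact Hpm].
    unfold Rdiv; apply Rmult_le_compat_r; lra. }
  assert (X2 : Rabs (p * (m ^ 2 + p * m - p ^ 2) / ((m + p) * (m ^ 2 + 3 * m * p + p ^ 2)) *
     (D 2%nat sm - (D 2%nat s + D 3%nat s * - m + D 4%nat s * (- m) ^ 2 / 2 + D 5%nat s * (- m) ^ 3 / 6)))
     <= M6 * (M1 * h) ^ 4).
  { rewrite Rabs_mult. apply Rle_trans with (1 * (M6 * m ^ 4)).
    apply Rmult_le_compat; [apply Rabs_pos| apply Rabs_pos| exact Bd| exact R2m].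
    rewrite Rmult_1_l. apply Rmult_le_compat_l; lra. }
  assert (X3 : Rabs (m * (p ^ 2 + p * m - m ^ 2) / ((m + p) * (m ^ 2 + 3 * m * p + p ^ 2)) *
     (D 2%nat sp - (D 2%nat s + D 3%nat s * p + D 4%nat s * p ^ 2 / 2 + D 5%nat s * p ^ 3 / 6)))
     <= M6 * (M1 * h) ^ 4).
  { rewrite Rabs_mult. apply Rle_trans with (1 * (M6 * p ^ 4)).
    apply Rmult_le_compat; [apply Rabs_pos| apply Rabs_pos| exact Be| exact R2p].
    rewrite Rmult_1_l. apply Rmult_le_compat_l; lra. }
  assert (X4 : Rabs (12 * p / ((m + p) * (m ^ 2 + 3 * m * p + p ^ 2)) *
     (D 0%nat sm - (D 0%nat s + D 1%nat s * - m + D 2%nat s * (- m) ^ 2 / 2 +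
       D 3%nat s * (- m) ^ 3 / 6 + D 4%nat s * (- m) ^ 4 / 24 + D 5%nat s * (- m) ^ 5 / 120)))
     <= 12 * (M6 * (M1 * h) ^ 4)).
  { rewrite Rabs_mult. set (aa := Rabs (12 * p / ((m + p) * (m ^ 2 + 3 * m * p + p ^ 2)))) in *.
    assert (0 <= aa) by apply Rabs_pos.
    apply Rle_trans with (aa * (M6 * m ^ 6)).
    { apply Rmult_le_compat_l; auto. }
    replace (aa * (M6 * m ^ 6)) with ((aa * m ^ 2) * (M6 * m ^ 4)) by ring.
    apply Rmult_le_compat; [apply Rmult_le_pos; [auto| apply pow2_ge_0]| apply Rmult_le_pos; [lra| apply pow_le; lra]| exact Ba|].
    apply Rmult_le_compat_l; lra. }
  assert (X5 : Rabs (12 * m / ((m + p) * (m ^ 2 + 3 * m * p + p ^ 2)) *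
     (D 0%nat sp - (D 0%nat s + D 1%nat s * p + D 2%nat s * p ^ 2 / 2 +
       D 3%nat s * p ^ 3 / 6 + D 4%nat s * p ^ 4 / 24 + D 5%nat s * p ^ 5 / 120)))
     <= 12 * (M6 * (M1 * h) ^ 4)).
  { rewrite Rabs_mult. set (aa := Rabs (12 * m / ((m + p) * (m ^ 2 + 3 * m * p + p ^ 2)))) in *.
    assert (0 <= aa) by apply Rabs_pos.
    apply Rle_trans with (aa * (M6 * p ^ 6)).
    { apply Rmult_le_compat_l; auto. }
    replace (aa * (M6 * p ^ 6)) with ((aa * p ^ 2) * (M6 * p ^ 4)) by ring.
    apply Rmult_le_compat; [apply Rmult_le_pos; [auto| apply pow2_ge_0]| apply Rmult_le_pos; [lra| apply pow_le; lra]| exact Bc|].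
    apply Rmult_le_compat_l; lra. }
  apply Rle_trans with (M5 * ((M1 * h) * (M1 * h) / 15 * (2 * M2 * h ^ 2)) + 26 * (M6 * (M1 * h) ^ 4)).
  { lra. }
  right. unfold Rdiv. ring.
Qed.
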